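(* Let $H$, $L$ be as in the context, assume $L\mid Z$, and let $S$ be a positive divisor of $Z/L$. Then for $\mathcal T_0\subseteq[MZ)$, the pair $(S,\mathcal T_0)$ is a feasible solution if and only if there exist $\ell_{m,s}\in[L)$ for $m\in[M)$, $s\in[S)$ such that $\mathcal T_0=\bigcup_{m\in[M),\,s\in[S)}\mathcal C_{m,s,\ell_{m,s}}$.
   Context: Notation: $[n)=\{0,1,\dots,n-1\}$. Let $M,N,Z$ be positive integers and let $H$ be a binary $MZ\times NZ$ matrix made of $M\times N$ blocks, each a $Z\times Z$ circulant; assume $H$ has no zero row and no two identical rows. Rows are indexed by $[MZ)$. For $i\in[MZ)$ and integer $s$, $\pi^s(i)=Z\lfloor i/Z\rfloor+((i+s)\bmod Z)$, and for $\mathcal T\subseteq[MZ)$, $\pi^s(\mathcal T)=\{\pi^s(x):x\in\mathcal T\}$. Fix an integer $L>1$. A pair $(S,\mathcal T_0)$, $S$ a positive integer and $\mathcal T_0\subseteq[MZ)$, is a feasible solution if, setting $\mathcal T_l=\pi^{lS}(\mathcal T_0)$ for $l\in[L)$, the sets $\mathcal T_0,\dots,\mathcal T_{L-1}$ are pairwise disjoint and their union is $[MZ)$. For $m\in[M)$, $s\in[S)$, $l\in[L)$ define the class $\mathcal C_{m,s,l}=\{mZ+((s+lS+rLS)\bmod Z): r\in\mathbb Z\}$ (these $LS$-classes partition $[MZ)$; for fixed $(m,s)$ the $L$ classes $\mathcal C_{m,s,0},\dots,\mathcal C_{m,s,L-1}$ partition $\{mZ+((s+rS)\bmod Z):r\in\mathbb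 Z\}$). *)

(* Defs.v *)
From mathcomp Require Import all_boot all_order all_algebra.
Set Implicit Arguments. Unset Strict Implicit. Unset Printing Implicit Defensive.

Definition block_circulant (M N Z : nat) (H : 'M[bool]_(M * Z, N * Z)) : Prop :=
  forall (r r' : 'I_(M * Z)) (c c' : 'I_(N * Z)),
    r %/ Z = r' %/ Z -> c %/ Z = c' %/ Z ->
    (r' %% Z = (r %% Z + 1) %% Z) -> (c' %% Z = (c %% Z + 1) %% Z) ->
    H r c = H r' c'.

Definition no_zero_row (M N Z : nat) (H : 'M[bool]_(M * Z, N * Z)) : Prop :=
  forall r : 'I_(M * Z), exists c : 'I_(N * Z), H r c.

Definition no_identical_rows (M N Z : nat) (H : 'M[bool]_(M * Z, N * Z)) : Prop :=
  forall r r' : 'I_(M * Z), r <> r' -> exists c : 'I_(N * Z), H r c != H r' c.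

Definition pi_shift (Z s i : nat) : nat := Z * (i %/ Z) + (i + s) %% Z.

Definition Tl (M Z S l : nat) (T0 : {set 'I_(M * Z)}) : {set 'I_(M * Z)} :=
  [set y : 'I_(M * Z) | [exists x in T0, nat_of_ord y == pi_shift Z (l * S) x]].

Definition feasible (M Z L S : nat) (T0 : {set 'I_(M * Z)}) : Prop :=
  0 < S /\
  (forall l1 l2 : 'I_L, l1 <> l2 -> [disjoint Tl S l1 T0 & Tl S l2 T0]) /\
  \bigcup_(l < L) Tl S l T0 = [set: 'I_(M * Z)].

Definition in_class (Z L S m s l x : nat) : Prop :=
  exists r : int,
    (x%:Z = (m * Z)%:Z + modz (s%:Z + (l * S)%:Z + r * (L * S)%:Z) Z%:Z)%R.

(* Main.v *)
Require Import Defs.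
From mathcomp Require Import all_boot all_order all_algebra zify ring.
Import GRing.Theory Num.Theory.

Lemma in_classP Z L S m s l x : 0 < Z -> (L*S) %| Z -> s < S -> l < L ->
  in_class Z L S m s l x <-> (x %/ Z = m /\ x %% (L*S) = s + l*S).
Proof.
move=> Z0 dvd sS lL; have [k Zk] := dvdnP dvd.
have P0 : 0 < L * S by nia.
have slt : s + l * S < L * S by nia.
split.
- case=> r Hr.
  set a := (s%:Z + (l * S)%:Z + r * (L * S)%:Z)%R in Hr.
  have t0 : (0 <= modz a Z%:Z)%R by lia.
  have t1 : (modz a Z%:Z < Z%:Z)%R by lia.
  pose t := absz (modz a Z%:Z).
  have ht : (t%:Z = modz a Z%:Z)%R by rewrite /t; lia.
  have hx : x = m * Z + t by lia.
  have tZ : t < Z by lia.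
  split; first by rewrite hx divnMDl // divn_small // addn0.
  rewrite hx Zk mulnA modnMDl.
  have e : modz a Z%:Z = (a + (- (divz a Z%:Z * k%:Z)) * (L * S)%:Z)%R.
    rewrite {2}(divz_eq a Z%:Z) Zk PoszM. ring.
  have : ((t %% (L * S))%:Z = (s + l * S)%:Z)%R.
    rewrite -modz_nat ht e addrC modzMDl /a addrC modzMDl PoszD modz_small //.
  by case.
- case=> xm xP. exists (((x %% Z) %/ (L * S))%:Z)%R.
  have tP : x %% Z %% (L * S) = x %% (L * S) by rewrite modn_dvdm.
  have E : ((s%:Z + (l * S)%:Z + ((x %% Z) %/ (L * S))%:Z * (L * S)%:Z = (x %% Z)%:Z)%R)%R.
    rewrite -!PoszM -!PoszD; congr Posz.
    have := divn_eq (x %% Z) (L * S); lia.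
  rewrite E modz_nat modn_small ?ltn_pmod //.
  have := divn_eq x Z; rewrite xm => hx.
  rewrite -PoszD; congr Posz; lia.
Qed.

Lemma sh_div Z d x : 0 < Z -> pi_shift Z d x %/ Z = x %/ Z.
Proof. by move=> Z0; rewrite /pi_shift mulnC divnMDl // (divn_small (ltn_pmod _ Z0)) addn0. Qed.

Lemma sh_modp Z p d x : p %| Z -> pi_shift Z d x %% p = (x + d) %% p.
Proof.
move=> H; rewrite /pi_shift -modnDm (eqP (dvdn_mulr _ H)) add0n modn_mod.
by rewrite (modn_dvdm _ H).
Qed.

Lemma sh_comp Z d1 d2 x : 0 < Z ->
  pi_shift Z d1 (pi_shift Z d2 x) = pi_shift Z (d2 + d1) x.
Proof.
move=> Z0; rewrite {1}/pi_shift sh_div //; congr (_ + _).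
by rewrite -modnDml sh_modp // modnDml addnA.
Qed.

Lemma sh_0 Z x : pi_shift Z 0 x = x.
Proof. by rewrite /pi_shift addn0 mulnC -divn_eq. Qed.

Lemma sh_Z Z x : pi_shift Z Z x = x.
Proof. by rewrite /pi_shift modnDr mulnC -divn_eq. Qed.

Lemma sh_lt M Z d x : 0 < Z -> x < M * Z -> pi_shift Z d x < M * Z.
Proof.
move=> Z0 xl; have q : x %/ Z < M by rewrite ltn_divLR.
have r : (x + d) %% Z < Z by rewrite ltn_pmod.
rewrite /pi_shift; nia.
Qed.

Lemma sh_inj Z d u v : 0 < Z -> pi_shift Z d u = pi_shift Z d v -> u = v.
Proof.
move=> Z0 e.
have e1 : u %/ Z = v %/ Z by rewrite -(@sh_div Z d u Z0) e sh_div.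
have e2 : u %% Z = v %% Z.
  have : (u + d) %% Z = (v + d) %% Z by rewrite -!(@sh_modp Z Z d _ (dvdnn Z)) e.
  by move/eqP; rewrite eqn_modDr => /eqP.
by rewrite (divn_eq u Z) (divn_eq v Z) e1 e2.
Qed.

Definition cls (L S x : nat) := (x %% (L * S)) %/ S.

Lemma cls_lt L S x : 0 < L -> 0 < S -> cls L S x < L.
Proof. by move=> L0 S0; rewrite /cls ltn_divLR // ltn_pmod // muln_gt0 L0. Qed.

Lemma modLS L S x : x %% (L * S) = x %% S + cls L S x * S.
Proof.
rewrite /cls {1}(divn_eq (x %% (L * S)) S) addnC modn_dvdm //.
exact: dvdn_mull (dvdnn S).
Qed.

Lemma cls_add L S d y : 0 < L -> 0 < S -> cls L S (y + d * S) = (cls L S y + d) %% L.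
Proof.
move=> L0 S0.
have Hy := divn_eq y (L * S); rewrite modLS in Hy.
have He := divn_eq (cls L S y + d) L.
have He' : (cls L S y + d) * S = ((cls L S y + d) %/ L * L + (cls L S y + d) %% L) * S by rewrite -He.
have sS : y %% S < S by rewrite ltn_pmod.
have eL : (cls L S y + d) %% L < L by rewrite ltn_pmod.
have E : y + d * S = (y %/ (L * S) + (cls L S y + d) %/ L) * (L * S) + (y %% S + (cls L S y + d) %% L * S).
  rewrite !mulnDl in He'. nia.
rewrite /cls E modnMDl modn_small; last by nia.
by rewrite addnC divnMDl // divn_small // addn0.
Qed.

Lemma cls_sh L S Z d x : 0 < L -> 0 < S -> (L * S) %| Z ->
  cls L S (pi_shift Z (d * S) x) = (cls L S x + d) %% L.
Proof. by move=> L0 S0 dv; rewrite -cls_add // /cls sh_modp. Qed.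

Lemma modS_sh S Z d x : S %| Z -> pi_shift Z (d * S) x %% S = x %% S.
Proof. by move=> dv; rewrite sh_modp // addnC modnMDl. Qed.

Lemma decLS L S x s l : 0 < S -> s < S -> x %% (L * S) = s + l * S ->
  x %% S = s /\ cls L S x = l.
Proof.
move=> S0 sS; rewrite modLS => e.
have e1 : x %% S = s.
  by move: (congr1 (modn^~ S) e) => /=; rewrite addnC modnMDl modn_mod addnC modnMDl (modn_small sS) => <-.
split => //; move: e; rewrite e1 => /addnI /eqP; by rewrite eqn_pmul2r // => /eqP.
Qed.

Lemma rep Z S x : 0 < Z -> S %| Z -> 0 < S ->
  pi_shift Z (((x %% Z) %/ S) * S) (x %/ Z * Z + x %% S) = x.
Proof.
move=> Z0 Sd S0.
have SZ : S <= Z by apply: dvdn_leq.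
have sS : x %% S < S by rewrite ltn_pmod.
have e1 : x %% Z = (x %% Z) %/ S * S + x %% S.
  by rewrite {1}(divn_eq (x %% Z) S) modn_dvdm.
have e : x %/ Z * Z + x %% S + (x %% Z) %/ S * S = x.
  by rewrite [RHS](divn_eq x Z) [X in _ = _ + X]e1 addnA addnAC.
rewrite /pi_shift e divnMDl // (divn_small (leq_trans sS SZ)) addn0.
by rewrite mulnC -divn_eq.
Qed.

Lemma memTl M Z S (l : nat) (T0 : {set 'I_(M * Z)}) (y : 'I_(M * Z)) :
  y \in Tl S l T0 <-> exists2 x : 'I_(M * Z), x \in T0 & (y : nat) = pi_shift Z (l * S) x.
Proof.
rewrite inE; split => [/existsP [x /andP [xT /eqP e]]|[x xT e]]; first by exists x.
by apply/existsP; exists x; rewrite xT e /=.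
Qed.

Lemma rev_dir (M Z L S : nat) (T0 : {set 'I_(M * Z)}) (ell : 'I_M -> 'I_S -> 'I_L) :
  0 < Z -> 1 < L -> 0 < S -> (L * S) %| Z -> L %| Z %/ S ->
  (forall x : 'I_(M * Z), x \in T0 <-> exists (m : 'I_M) (s : 'I_S), in_class Z L S m s (ell m s) x) ->
  feasible L S T0.
Proof.
move=> Z0 L1 S0 LSd LK Hell.
have L0 : 0 < L by lia.
have Sd : S %| Z := dvdn_trans (dvdn_mull L (dvdnn S)) LSd.
have ltM : forall x : 'I_(M * Z), x %/ Z < M by move=> x; rewrite ltn_divLR.
pose mo x := Ordinal (ltM x).
pose so (x : 'I_(M * Z)) := Ordinal (ltn_pmod x S0).
have key : forall x : 'I_(M * Z), x \in T0 <-> cls L S x = ell (mo x) (so x).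
  move=> x; rewrite Hell; split.
  - case=> m [s] /in_classP [] // [xm xP].
    have [xs xc] := decLS L S x s (ell m s) S0 (ltn_ord s) xP.
    have -> : mo x = m by apply: val_inj.
    by have -> : so x = s by apply: val_inj.
  - move=> h; exists (mo x), (so x); apply/in_classP => //.
    by split => //; rewrite modLS h.
have KS : Z %/ S * S = Z by rewrite divnK.
have LleK : L <= Z %/ S by apply: dvdn_leq => //; rewrite divn_gt0 // dvdn_leq.
have keyTl : forall (y : 'I_(M * Z)) (l : 'I_L),
    y \in Tl S l T0 <-> cls L S y = (ell (mo y) (so y) + l) %% L.
  move=> y l; rewrite memTl; split.
  - case=> x xT e.
    have -> : mo y = mo x by apply: val_inj; rewrite /= e sh_div.
    have -> : so y = so x by apply: val_inj; rewrite /= e modS_sh.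
    by rewrite e cls_sh // -(proj1 (key x) xT).
  - move=> h.
    pose x := Ordinal (sh_lt M Z ((Z %/ S - l) * S) y Z0 (ltn_ord y)).
    exists x.
      apply/key.
      have -> : mo x = mo y by apply: val_inj; rewrite /= sh_div.
      have -> : so x = so y by apply: val_inj; rewrite /= modS_sh.
      rewrite /= cls_sh // h modnDml -addnA subnKC; last by apply: leq_trans (ltnW (ltn_ord l)) LleK.
      by case/dvdnP: LK => k ->; rewrite addnC modnMDl modn_small // ltn_ord.
    by rewrite /= sh_comp // -mulnDl subnK ?KS ?sh_Z //; apply: leq_trans (ltnW (ltn_ord l)) LleK.
split => //; split.
- move=> l1 l2 ne.
  apply/pred0P => y /=; apply/negP => /andP [/keyTl h1 /keyTl h2].
  apply: ne; apply: val_inj; move: h2; rewrite h1 => /eqP; rewrite eqn_modDl.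
  by rewrite !modn_small // => /eqP.
- apply/setP => y; rewrite inE; apply/bigcupP.
  set e := ell (mo y) (so y).
  exists (Ordinal (ltn_pmod (cls L S y + (L - e)) L0)) => //.
  apply/keyTl => /=.
  rewrite modnDmr addnCA subnKC; last exact: ltnW (ltn_ord e).
  by rewrite modnDr modn_small // cls_lt.
Qed.

Lemma fwd_dir (M Z L S : nat) (T0 : {set 'I_(M * Z)}) :
  0 < Z -> 1 < L -> 0 < S -> (L * S) %| Z -> L %| Z %/ S ->
  feasible L S T0 ->
  exists ell : 'I_M -> 'I_S -> 'I_L,
    forall x : 'I_(M * Z),
      x \in T0 <-> exists (m : 'I_M) (s : 'I_S), in_class Z L S m s (ell m s) x.
Proof.
move=> Z0 L1 S0 LSd LK [_ [Hdis Hcov]].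
have L0 : 0 < L by lia.
have Sd : S %| Z := dvdn_trans (dvdn_mull L (dvdnn S)) LSd.
have KS : Z %/ S * S = Z by rewrite divnK.
have SZ : S <= Z by apply: dvdn_leq.
have F0 : forall x : 'I_(M * Z), x \in T0 -> x \in Tl S (Ordinal L0) T0.
  by move=> x xT; apply/memTl; exists x => //=; rewrite mul0n sh_0.
have F1 : forall (a y : 'I_(M * Z)) i, a \in T0 ->
    (y : nat) = pi_shift Z (i * S) a -> 0 < i < L -> y \notin T0.
  move=> a y i aT e /andP [i0 iL]; apply/negP => yT.
  have h1 := F0 y yT.
  have h2 : y \in Tl S (Ordinal iL) T0 by apply/memTl; exists a.
  have ne : Ordinal L0 <> Ordinal iL by move/(congr1 val) => /=; lia.
  by move: (disjointFr (Hdis _ _ ne) h1); rewrite h2.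
have F2 : forall (a y : 'I_(M * Z)), a \in T0 ->
    (y : nat) = pi_shift Z (L * S) a -> y \in T0.
  move=> a y aT e.
  have : y \in \bigcup_(l < L) Tl S l T0 by rewrite Hcov inE.
  case/bigcupP => l _ /memTl [b bT e2].
  have lL := ltn_ord l.
  case: (posnP l) => [l0 | lpos].
    by have -> : y = b by apply: ord_inj; rewrite e2 l0 mul0n sh_0.
  have eb : (b : nat) = pi_shift Z ((L - l) * S) a.
    apply: (@sh_inj Z (l * S)) => //.
    by rewrite -e2 e sh_comp // -mulnDl subnK // ltnW.
  have : 0 < L - l < L by apply/andP; split; lia.
  by move/(F1 a b (L - l) aT eb)/negP.
have F3 : forall n (a y : 'I_(M * Z)), a \in T0 ->
    (y : nat) = pi_shift Z (n * L * S) a -> y \in T0.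
  elim=> [|n IH] a y aT e.
    by have -> : y = a by apply: ord_inj; rewrite e !mul0n sh_0.
  pose z := Ordinal (sh_lt M Z (n * L * S) a Z0 (ltn_ord a)).
  have zT : z \in T0 by apply: (IH a).
  apply: (F2 z y zT); rewrite e /= sh_comp //; congr pi_shift; lia.
have Key : forall b x : 'I_(M * Z), b \in T0 -> x %/ Z = b %/ Z -> x %% S = b %% S ->
    (x \in T0 <-> cls L S x = cls L S b).
  move=> b x bT xb sb.
  set jx := (x %% Z) %/ S; set jb := (b %% Z) %/ S.
  have jbK : jb <= Z %/ S by apply: leq_div2r; apply: ltnW; rewrite ltn_pmod.
  set d := jx + (Z %/ S - jb).
  have ex : pi_shift Z (d * S) b = x.
    rewrite -[in LHS](rep Z S b) // sh_comp //.
    rewrite -(rep Z S x) // /jx xb sb -/jb.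
    rewrite -mulnDl addnCA subnKC // mulnDl KS.
    by rewrite -sh_comp // sh_Z.
  set q := d %/ L; set i := d %% L.
  pose z := Ordinal (sh_lt M Z (q * L * S) b Z0 (ltn_ord b)).
  have zT : z \in T0 by apply: (F3 q b).
  have exz : (x : nat) = pi_shift Z (i * S) z.
    by rewrite /= sh_comp // -ex (divn_eq d L) -/q -/i mulnDl.
  have cx : cls L S x = (cls L S b + d) %% L by rewrite -ex cls_sh.
  have cbL := cls_lt L S b L0 S0.
  have iL : i < L by rewrite ltn_pmod.
  case: (posnP i) => [i0 | ipos].
    rewrite cx -modnDmr -/i i0 addn0 modn_small //.
    have -> : x = z by apply: ord_inj; rewrite exz i0 mul0n sh_0.
    by split.
  have xT : x \notin T0 by apply: (F1 z x i zT exz); apply/andP.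
  split; first by move=> h; rewrite h in xT.
  rewrite cx -modnDmr -/i => h; exfalso.
  have : cls L S b + i == cls L S b + 0 %[mod L] by rewrite h addn0 modn_small.
  by rewrite eqn_modDl mod0n modn_small // => /eqP; lia.
have ex_b : forall (m : 'I_M) (s : 'I_S), exists b : 'I_(M * Z),
    (b \in T0) /\ (b %/ Z = m /\ b %% S = s).
  move=> m s.
  have mM := ltn_ord m; have sS := ltn_ord s.
  have y0lt : m * Z + s < M * Z by nia.
  pose y0 := Ordinal y0lt.
  have : y0 \in \bigcup_(l < L) Tl S l T0 by rewrite Hcov inE.
  case/bigcupP => l _ /memTl [b bT e2].
  exists b; split => //; split.
    rewrite -(@sh_div Z (l * S) b Z0) -e2 /= divnMDl // divn_small ?addn0 //.
    exact: leq_trans sS SZ.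
  rewrite -(modS_sh S Z l b Sd) -e2 /= -KS mulnA modnMDl modn_small //.
have [bf Hbf] := fin_all_exists (fun m => fin_all_exists (ex_b m)).
exists (fun m s => Ordinal (cls_lt L S (bf m s) L0 S0)) => x.
have ltM : x %/ Z < M by rewrite ltn_divLR.
split.
- move=> xT.
  exists (Ordinal ltM), (Ordinal (ltn_pmod x S0)).
  have [bT [bm bs]] := Hbf (Ordinal ltM) (Ordinal (ltn_pmod x S0)).
  apply/(in_classP _ _ _ _ _ _ _ Z0 LSd (ltn_pmod x S0) (ltn_ord _)) => /=.
  split => //; rewrite modLS.
  by rewrite (proj1 (Key _ x bT (esym bm) (esym bs)) xT).
- case=> m [s] /in_classP [] // [xm xP].
  have [xs xc] := decLS L S x s _ S0 (ltn_ord s) xP.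
  have [bT [bm bs]] := Hbf m s.
  apply/(Key _ x bT); [by rewrite xm bm | by rewrite xs bs | by rewrite xc].
Qed.

Theorem theorem2 (M N Z L : nat) (H : 'M[bool]_(M * Z, N * Z))
  (HM : 0 < M) (HN : 0 < N) (HZ : 0 < Z)
  (Hcirc : block_circulant H) (Hnz : no_zero_row H) (Hnid : no_identical_rows H)
  (HL : 1 < L) (HLZ : L %| Z)
  (S : nat) (HS : 0 < S) (HSd : S %| Z %/ L)
  (T0 : {set 'I_(M * Z)}) :
  feasible L S T0 <->
  exists ell : 'I_M -> 'I_S -> 'I_L,
    forall x : 'I_(M * Z),
      x \in T0 <-> exists (m : 'I_M) (s : 'I_S), in_class Z L S m s (ell m s) x.
Proof.
have [k hk] := dvdnP HSd.
have EZ : Z = k * S * L by rewrite -hk divnK.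
have LSd : (L * S) %| Z by rewrite EZ mulnC; apply/dvdnP; exists k; ring.
have LK : L %| Z %/ S.
  by rewrite EZ -mulnA (mulnC S) mulnA mulnK //; apply: dvdn_mull.
split; first exact: fwd_dir.
by case=> ell Hell; exact: (rev_dir M Z L S T0 ell HZ HL HS LSd LK Hell).
Qed.
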